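(* Let $\Gamma$ be the middle-third Cantor set. The set of all uniformly perfect metrics in $\mathrm{Met}(\Gamma)$ is an $F_\sigma$ subset of $(\mathrm{Met}(\Gamma),\mathcal{D}_\Gamma)$.
   Context: $\mathrm{Met}(\Gamma)$ is the set of all metrics on $\Gamma$ generating its topology; $\mathcal{D}_\Gamma(d,e)=\sup_{x,y}|d(x,y)-e(x,y)|$. A metric space $(X,d)$ is uniformly perfect if there is $c\in(0,1)$ such that for every $x\in X$ and every $r\in(0,\delta_d(X))$ ($\delta_d$ = diameter) there is $y\in X$ with $cr\le d(x,y)\le r$. $F_\sigma$: countable union of closed sets. *)

(* Defs.v *)
From HB Require Import structures.
From mathcomp Require Import all_boot all_order all_algebra.
From mathcomp Require Import all_classical all_reals.
From mathcomp Require Import ereal.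
Set Implicit Arguments. Unset Strict Implicit. Unset Printing Implicit Defensive.
Import Order.TTheory GRing.Theory Num.Theory.
Local Open Scope classical_set_scope.
Local Open Scope ring_scope.

Section Defs.
Variable R : realType.

(* Middle-third Cantor set: C_0 = [0,1], C_{n+1} = C_n/3 ∪ (2/3 + C_n/3),
   Gamma = ⋂_n C_n. *)
Fixpoint cantor_stage (n : nat) : set R :=
  match n with
  | 0%N => [set x | 0 <= x <= 1]
  | n'.+1 => [set x | cantor_stage n' (3 * x) \/ cantor_stage n' (3 * x - 2)]
  end.

Definition cantor_set : set R := \bigcap_(n in setT) cantor_stage n.

Definition Gam : Type := {x : R | cantor_set x}.

Definition is_metric (T : Type) (d : T -> T -> R) : Prop :=
  [/\ forall x y, 0 <= d x y,
      forall x y, d x y = 0 <-> x = y,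
      forall x y, d x y = d y x &
      forall x y z, d x z <= d x y + d y z].

Definition metric_open (T : Type) (d : T -> T -> R) (U : set T) : Prop :=
  forall x, U x -> exists2 r : R, 0 < r & forall y, d x y < r -> U y.

Definition euclid_Gam (x y : Gam) : R := `|sval x - sval y|.

Definition Met : set (Gam -> Gam -> R) :=
  [set d | is_metric d /\
     forall U : set Gam, metric_open d U <-> metric_open euclid_Gam U].

Definition DGam (d e : Gam -> Gam -> R) : \bar R :=
  ereal_sup [set (`|d xy.1 xy.2 - e xy.1 xy.2|)%:E | xy in [set: Gam * Gam]].

Definition diam (T : Type) (d : T -> T -> R) : \bar R :=
  ereal_sup [set (d xy.1 xy.2)%:E | xy in [set: T * T]].

Definition uniformly_perfect (T : Type) (d : T -> T -> R) : Prop :=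
  exists2 c : R, 0 < c < 1 &
    forall (x : T) (r : R), 0 < r -> (r%:E < diam d)%E ->
      exists y : T, c * r <= d x y <= r.

Definition Met_closed (F : set (Gam -> Gam -> R)) : Prop :=
  (F `<=` Met)%classic /\
  forall d, Met d ->
    (forall eps : R, 0 < eps -> exists2 e, F e & (DGam d e < eps%:E)%E) ->
    F d.

Definition Met_Fsigma (A : set (Gam -> Gam -> R)) : Prop :=
  exists F : nat -> set (Gam -> Gam -> R),
    (forall n, Met_closed (F n)) /\ A = \bigcup_(n in [set: nat]) F n.

End Defs.

(* Main.v *)
Require Import Defs.
From HB Require Import structures.
From mathcomp Require Import all_boot all_order all_algebra.
From mathcomp Require Import all_classical all_reals.
From mathcomp Require Import ereal.
From mathcomp Require Import lra.
Local Open Scope classical_set_scope.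

Section Aux.
Import Order.TTheory GRing.Theory Num.Theory.
Local Open Scope ring_scope.
Variable R : realType.

Definition cst (n : nat) : R := (n.+1%:R)^-1.

Definition Gs (n : nat) (e : Gam R -> Gam R -> R) : Prop :=
  forall x (r : R), 0 < r -> (r%:E < diam e)%E ->
    exists y, cst n * r <= e x y <= r.

Definition Fs (n : nat) : set (Gam R -> Gam R -> R) :=
  [set d | Met d /\ forall eps : R, 0 < eps ->
     exists e, Gs n e /\ forall a b, `|d a b - e a b| <= eps].

Lemma cst_gt0 n : 0 < cst n.
Proof. by rewrite /cst invr_gt0 ltr0n. Qed.

Lemma cst_le1 n : cst n <= 1.
Proof. by rewrite /cst invf_le1 ?ltr0n // ler1n. Qed.

Lemma dgam_pt (d e : Gam R -> Gam R -> R) (eps : R) :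
  (DGam d e < eps%:E)%E -> forall a b, `|d a b - e a b| < eps.
Proof.
move=> H a b.
have := @ereal_sup_ubound R
  [set (`|d xy.1 xy.2 - e xy.1 xy.2|)%:E | xy in [set: Gam R * Gam R]]
  (`|d a b - e a b|)%:E.
move=> /(_ (ex_intro2 _ _ (a, b) I erefl)) Hle.
by rewrite -lte_fin; apply: (le_lt_trans Hle H).
Qed.

Lemma Fs_closed n : Met_closed (Fs n).
Proof.
split; first by move=> d [].
move=> d Md H; split => // eps eps0.
have eps2 : 0 < eps / 2 by rewrite divr_gt0.
have [e [_ He] /dgam_pt Hde] := H _ eps2.
have [e' [Ge' He']] := He _ eps2.
exists e'; split => // a b.
have -> : d a b - e' a b = (d a b - e a b) + (e a b - e' a b) by rewrite addrA subrK.
apply: (le_trans (ler_normD _ _)).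
rewrite [leRHS](splitr eps); apply: lerD; last exact: He'.
exact/ltW/Hde.
Qed.

Lemma Fs_up n d : Fs n d -> uniformly_perfect d.
Proof.
move=> [Md Hd].
exists (cst n / 4).
  apply/andP; split; first by rewrite divr_gt0 ?cst_gt0.
  have := cst_gt0 n; have := cst_le1 n; move=> h1 h2; lra.
move=> x r r0 /ereal_sup_gt [_ [[x0 y0] _ <-]] /=; rewrite lte_fin => rd.
have c0 := cst_gt0 n; have c1 := cst_le1 n.
have eps0 : 0 < cst n * r / 8 by rewrite !divr_gt0 ?mulr_gt0.
have [e [Ge He]] := Hd _ eps0.
have Hr2 : ((r / 2)%:E < diam e)%E.
  apply: (lt_le_trans (y := (e x0 y0)%:E)); last first.
    apply: ereal_sup_ubound; by exists (x0, y0).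
  rewrite lte_fin.
  have := He x0 y0; rewrite ler_norml => /andP [_ h].
  have : cst n * r / 8 <= r / 8 by rewrite ler_pM2r // ger_pMl.
  move=> h2; lra.
have [y /andP [y1 y2]] := Ge x (r / 2) (divr_gt0 r0 (ltr0Sn _ 1)) Hr2.
exists y.
have := He x y; rewrite ler_norml => /andP [h1 h2].
have : cst n * r / 8 <= r / 8 by rewrite ler_pM2r // ger_pMl.
have : cst n * (r / 2) = cst n * r / 2 by rewrite mulrA.
move=> h3 h4; apply/andP; split; lra.
Qed.

Lemma up_Fs d : Met d -> uniformly_perfect d -> exists n, Fs n d.
Proof.
move=> Md [c /andP [c0 c1] Hc].
exists (Num.Def.trunc (c^-1)); split => // eps eps0.
exists d; split => [x r r0 rd|a b]; last by rewrite subrr normr0 ltW.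
have [y /andP [h1 h2]] := Hc x r r0 rd.
exists y; rewrite h2 andbT; apply: le_trans h1.
rewrite ler_pM2r // /cst -[leRHS]invrK lef_pV2 ?posrE ?ltr0n ?invr_gt0 //.
exact/ltW/truncnS_gt.
Qed.

End Aux.

Theorem lemma4p1 (R : realType) :
  Met_Fsigma [set d : Gam R -> Gam R -> R | Met d /\ uniformly_perfect d].
Proof.
exists (@Fs R); split; first exact: Fs_closed.
apply/seteqP; split.
  move=> d [Md Ud]; have [n Hn] := @up_Fs R d Md Ud; by exists n.
move=> d [n _ Hn]; split; first by case: Hn.
exact: (@Fs_up R n d Hn).
Qed.
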